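(* There exists a continuous, differentiable curve $s$ in $\mathbb{R}^2$ of finite length with no cross-over (that is, $t\mapsto s(t)$ is one-to-one) such that, for every $R>0$, $s$ is not $R$-monotone.
   Context: A closed ball is a set $\{x:\|x-a\|\le \rho\}$ with center $a$ and radius $\rho$. For $R>0$, a curve $s$ (considered with its arc-length parametrization) is called $R$-monotone if the inverse image under $s$ of every closed ball of radius at most $R$ is a connected subset of the parameter domain. *)

(* Defs.v *)
From HB Require Import structures.
From mathcomp Require Import all_boot all_order all_algebra.
From mathcomp Require Import all_classical all_reals all_analysis.
Set Implicit Arguments. Unset Strict Implicit. Unset Printing Implicit Defensive.
Import Order.TTheory GRing.Theory Num.Theory.
Import numFieldNormedType.Exports.
Local Open Scope classical_set_scope.
Local Open Scope ring_scope.

Definition dist2 (R : realType) (p q : R * R) : R :=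
  Num.sqrt ((p.1 - q.1) ^+ 2 + (p.2 - q.2) ^+ 2).

Definition poly_len (R : realType) (s : R -> R * R) (ts : seq R) : R :=
  \sum_(i < (size ts).-1) dist2 (s (nth 0 ts i)) (s (nth 0 ts i.+1)).

Definition arc_length (R : realType) (s : R -> R * R) (a b : R) : \bar R :=
  ereal_sup [set (poly_len s ts)%:E | ts in
    [set ts : seq R | sorted <=%R ts /\ all (fun t => a <= t <= b) ts]].

Definition arclength_param (R : realType) (s : R -> R * R) (L : R) : Prop :=
  forall t, 0 <= t <= L -> arc_length s 0 t = t%:E.

Definition R_monotone (R : realType) (s : R -> R * R) (L Rad : R) : Prop :=
  forall (a : R * R) (rho : R), 0 <= rho -> rho <= Rad ->
    connected [set t : R | 0 <= t <= L /\ dist2 (s t) a <= rho].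

(* Main.v *)
Require Import Defs.
From HB Require Import structures.
From mathcomp Require Import all_boot all_order all_algebra.
From mathcomp Require Import all_classical all_reals all_analysis.
From mathcomp Require Import ring lra.
Import Order.TTheory GRing.Theory Num.Theory.
Import numFieldNormedType.Exports.
Local Open Scope classical_set_scope.
Local Open Scope ring_scope.

Set Implicit Arguments. Unset Strict Implicit. Unset Printing Implicit Defensive.
Section Curve.
Variable R : realType.
Notation mu := (@lebesgue_measure R).

Definition pp (t : R) : R := Num.sqrt (Num.max (t - 1) 0).
Definition qq (t : R) : R := Num.sqrt (Num.max (1 - t) 0).
Definition th (t : R) : R := pp t - qq t.

Lemma pp_cont : continuous pp.
Proof.
move=> t; apply: continuous_comp; last exact: sqrt_continuous.
have : {for t, continuous ((fun x : R => x - 1) \max (fun=> 0))}.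
  apply: continuous_max; last exact: cvg_cst.
  by apply: cvgB; [exact: cvg_id|exact: cvg_cst].
by [].
Qed.
Lemma qq_cont : continuous qq.
Proof.
move=> t; apply: continuous_comp; last exact: sqrt_continuous.
have : {for t, continuous ((fun x : R => 1 - x) \max (fun=> 0))}.
  apply: continuous_max; last exact: cvg_cst.
  by apply: cvgB; [exact: cvg_cst|exact: cvg_id].
by [].
Qed.
Lemma th_cont : continuous th.
Proof. move=> t; have : {for t, continuous (pp - qq)} by apply: cvgB; [exact: pp_cont|exact: qq_cont]. by []. Qed.

Definition Xc (t : R) : R := (\int[mu]_(x in `[-1, t]) cos (th x))%R.
Definition Yc (t : R) : R := (\int[mu]_(x in `[-1, t]) sin (th x))%R.

Lemma Xc_der t : -1 < t -> derivable Xc t 1 /\ derive1 Xc t = cos (th t).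
Proof.
move=> ht.
have := @continuous_FTC1_closed R (fun x => cos (th x)) (-1) t (t + 1) _ _ ht.
apply.
- by rewrite ltrDl.
- apply: continuous_compact_integrable; first exact: segment_compact.
  apply: continuous_subspaceT => x; apply: continuous_comp; [exact: th_cont|exact: continuous_cos].
- apply: continuous_comp; [exact: th_cont|exact: continuous_cos].
Qed.

Lemma Yc_der t : -1 < t -> derivable Yc t 1 /\ derive1 Yc t = sin (th t).
Proof.
move=> ht.
have := @continuous_FTC1_closed R (fun x => sin (th x)) (-1) t (t + 1) _ _ ht.
apply.
- by rewrite ltrDl.
- apply: continuous_compact_integrable; first exact: segment_compact.
  apply: continuous_subspaceT => x; apply: continuous_comp; [exact: th_cont|exact: continuous_sin].
- apply: continuous_comp; [exact: th_cont|exact: continuous_sin].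
Qed.

Definition gc (v1 v2 : R) (t : R) : R := v1 * Xc t + v2 * Yc t.

Lemma gc_der (v1 v2 t : R) : -1 < t ->
  is_derive t 1 (gc v1 v2) (v1 * cos (th t) + v2 * sin (th t)).
Proof.
move=> ht; have [dX eX] := Xc_der ht; have [dY eY] := Yc_der ht.
have iX : is_derive t 1 Xc (cos (th t)) by rewrite -eX derive1E; exact: derivableP.
have iY : is_derive t 1 Yc (sin (th t)) by rewrite -eY derive1E; exact: derivableP.
exact: (is_deriveD (is_deriveZ v1 iX) (is_deriveZ v2 iY)).
Qed.

Lemma gc_mvt (v1 v2 a b : R) : -1 < a -> a < b ->
  exists2 c, c \in `]a, b[ &
    gc v1 v2 b - gc v1 v2 a = (v1 * cos (th c) + v2 * sin (th c)) * (b - a).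
Proof.
move=> ha hab; apply: MVT => //.
- move=> x /[dup] /itvP hx _; apply: gc_der.
  by apply: lt_trans ha _; rewrite hx.
- apply: derivable_within_continuous => x /[dup] /itvP hx _.
  apply: ex_derive; apply: gc_der.
  by apply: lt_le_trans ha _; rewrite hx.
Qed.
End Curve.

Section T2.
Variable R : realType.

Lemma th_ge1 (t : R) : 1 <= t -> th t = Num.sqrt (t - 1).
Proof.
move=> h; rewrite /th /pp /qq (@max_l _ _ (t - 1)) ?subr_ge0 //.
by rewrite (@max_r _ _ (1 - t)) ?subr_le0 // sqrtr0 subr0.
Qed.

Lemma th_le1 (t : R) : t <= 1 -> th t = - Num.sqrt (1 - t).
Proof.
move=> h; rewrite /th /pp /qq (@max_r _ _ (t - 1)) ?subr_le0 //.
by rewrite (@max_l _ _ (1 - t)) ?subr_ge0 // sqrtr0 sub0r.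
Qed.

Lemma th_mono (x y : R) : x <= y -> th x <= th y.
Proof.
move=> xy.
have [y1|y1] := leP y 1.
  have x1 : x <= 1 by apply: le_trans xy y1.
  rewrite th_le1 // th_le1 // lerN2 ler_sqrt ?subr_ge0 //.
  by rewrite lerB.
have [x1|x1] := leP x 1.
  rewrite th_le1 // (th_ge1 (ltW y1)).
  by rewrite (@le_trans _ _ 0) // ?oppr_le0 sqrtr_ge0.
rewrite (th_ge1 (ltW x1)) (th_ge1 (ltW y1)) ler_sqrt ?subr_ge0 ?(ltW y1) //.
by rewrite lerB.
Qed.

Lemma th_range (t : R) : 0 <= t <= 2 -> -1 <= th t <= 1.
Proof.
move=> /andP[t0 t2].
have [t1|t1] := leP t 1.
  have s0 := sqrtr_ge0 (1 - t).
  have s1 : Num.sqrt (1 - t) <= 1 by rewrite -[X in _ <= X]sqrtr1 ler_sqrt //; lra.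
  rewrite th_le1 //; apply/andP; split; lra.
have s0 := sqrtr_ge0 (t - 1).
have s1 : Num.sqrt (t - 1) <= 1 by rewrite -[X in _ <= X]sqrtr1 ler_sqrt //; lra.
rewrite (th_ge1 (ltW t1)); apply/andP; split; lra.
Qed.

Lemma cos_ge_1mx (x : R) : 0 <= x -> 1 - x <= cos x.
Proof.
rewrite le_eqVlt => /orP[/eqP<-|x0]; first by rewrite cos0 subr0.
have [c _ h] := @MVT R cos (fun x => - sin x) 0 x x0 (fun x _ => is_derive_cos x)
  (continuous_subspaceT (fun x => @continuous_cos R x)).
move: h; rewrite cos0 subr0 => h.
have : cos x = 1 + - sin c * x by rewrite -h addrC subrK.
move=> ->; have := sin_le1 c; nra.
Qed.

Lemma cos_ge_cos1 (x : R) : -1 <= x <= 1 -> cos 1 <= cos x.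
Proof.
move=> hx; have hx' : `|x| <= 1 by rewrite ler_norml.
have p1 : (1:R) <= pi by apply: le_trans (pi_ge2 R); lra.
rewrite -[cos x]cos_norm leNgt ltr_cos ?in_itv /= ?normr_ge0 ?ler01 ?p1 //.
- by rewrite -leNgt.
- by rewrite (le_trans hx').
Qed.

Lemma sin_ge (x : R) : 0 <= x <= 1 -> cos 1 * x <= sin x.
Proof.
move=> /andP[]; rewrite le_eqVlt => /orP[/eqP<- _|x0 x1]; first by rewrite sin0 mulr0.
have [c /[dup] /itvP hc _ h] := @MVT R sin cos 0 x x0 (fun x _ => is_derive_sin x)
  (continuous_subspaceT (fun x => @continuous_sin R x)).
move: h; rewrite sin0 subr0 => ->.
have : cos 1 <= cos c.
  apply: cos_ge_cos1; apply/andP; split.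
    by rewrite (@le_trans _ _ 0) // ?lerN10 ?hc.
  by apply: le_trans x1; rewrite ltW ?hc.
rewrite subr0; nra.
Qed.

End T2.

Section T3.
Variable R : realType.

Definition sc (t : R) : R * R := (Xc t, Yc t).

Lemma cs (u1 u2 w1 w2 : R) : w1 ^+ 2 + w2 ^+ 2 = 1 ->
  u1 * w1 + u2 * w2 <= Num.sqrt (u1 ^+ 2 + u2 ^+ 2).
Proof.
move=> hw.
have h : (u1 * w1 + u2 * w2) ^+ 2 <= u1 ^+ 2 + u2 ^+ 2.
  have e : (u1 ^+ 2 + u2 ^+ 2) = (u1 ^+ 2 + u2 ^+ 2) * (w1 ^+ 2 + w2 ^+ 2) by rewrite hw mulr1.
  rewrite e; have := sqr_ge0 (u1 * w2 - u2 * w1); nra.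
rewrite (le_trans (ler_norm _)) // -sqrtr_sqr ler_sqrt //.
by rewrite addr_ge0 ?sqr_ge0.
Qed.

Lemma dist2_sc (a b : R) : dist2 (sc a) (sc b) =
  Num.sqrt ((Xc b - Xc a) ^+ 2 + (Yc b - Yc a) ^+ 2).
Proof. by rewrite /dist2 /sc /= -(sqrrN (Xc a - _)) -(sqrrN (Yc a - _)) !opprB. Qed.

Lemma Lip (a b : R) : -1 < a -> a <= b -> dist2 (sc a) (sc b) <= b - a.
Proof.
move=> ha; rewrite le_eqVlt => /orP[/eqP<-|ab].
  by rewrite dist2_sc !subrr expr0n /= addr0 sqrtr0.
rewrite dist2_sc.
set D1 := Xc b - Xc a; set D2 := Yc b - Yc a.
have [c _ h] := gc_mvt D1 D2 ha ab.
have e : gc D1 D2 b - gc D1 D2 a = D1 ^+ 2 + D2 ^+ 2 by rewrite /gc /D1 /D2; ring.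
have hc := cs D1 D2 (cos2Dsin2 (th c)).
set N := Num.sqrt _ in hc *.
have N2 : N ^+ 2 = D1 ^+ 2 + D2 ^+ 2 by rewrite sqr_sqrtr // addr_ge0 ?sqr_ge0.
have N0 : 0 <= N := sqrtr_ge0 _.
have : N ^+ 2 <= N * (b - a).
  rewrite N2 -e h; apply: ler_wpM2r; lra.
nra.
Qed.

Lemma Low (a b : R) : -1 < a -> a <= b ->
  (b - a) * (1 - (th b - th a)) <= dist2 (sc a) (sc b).
Proof.
move=> ha; rewrite le_eqVlt => /orP[/eqP<-|ab].
  by rewrite subrr mul0r sqrtr_ge0.
rewrite dist2_sc.
have [c /[dup] /itvP hc _ h] := gc_mvt (cos (th a)) (sin (th a)) ha ab.
have hcs := cs (Xc b - Xc a) (Yc b - Yc a) (cos2Dsin2 (th a)).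
have e : gc (cos (th a)) (sin (th a)) b - gc (cos (th a)) (sin (th a)) a =
  (Xc b - Xc a) * cos (th a) + (Yc b - Yc a) * sin (th a) by rewrite /gc; ring.
have e2 : cos (th a) * cos (th c) + sin (th a) * sin (th c) = cos (th c - th a).
  by rewrite cosB; ring.
have m1 : th a <= th c by apply: th_mono; rewrite ltW ?hc.
have m2 : th c <= th b by apply: th_mono; rewrite ltW ?hc.
have cl : 1 - (th c - th a) <= cos (th c - th a) by apply: cos_ge_1mx; rewrite subr_ge0.
apply: le_trans hcs; rewrite -e h e2.
have : (1 - (th b - th a)) <= cos (th c - th a) by lra.
move=> hh; rewrite mulrC; apply: ler_wpM2r; lra.
Qed.

End T3.

Section T4.
Variable R : realType.

Lemma poly_ub (T : R) (ts : seq R) : 0 <= T -> sorted <=%R ts ->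
  all (fun t => 0 <= t <= T) ts -> poly_len (@sc R) ts <= T.
Proof.
move=> T0 Hs Ha; rewrite /poly_len.
case E: ts => [|x0 tl].
  by rewrite /= big_ord0.
rewrite -E.
have Hn i : (i < size ts)%N -> 0 <= nth 0 ts i <= T.
  by move=> hi; move/(all_nthP 0): Ha; apply.
have sz : (0 < size ts)%N by rewrite E.
apply: (@le_trans _ _ (\sum_(i < (size ts).-1) (nth 0 ts i.+1 - nth 0 ts i))).
  apply: ler_sum => i _.
  have hi1 : (i.+1 < size ts)%N.
    have := ltn_ord i; move: (nat_of_ord i) => k; move: sz.
    by case: (size ts) => // n _ /=.
  have hi : (i < size ts)%N by apply: ltn_trans hi1.
  apply: Lip.
    by have := Hn _ hi; move=> /andP[h _]; apply: lt_le_trans h; rewrite ltrN10.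
  by apply: (@sorted_leq_nth _ <=%R le_trans lexx 0 ts Hs i i.+1); rewrite ?inE.
rewrite -(big_mkord xpredT (fun i => nth 0 ts i.+1 - nth 0 ts i)) telescope_sumr //.
have hl : ((size ts).-1 < size ts)%N by rewrite prednK.
have := Hn _ sz; have := Hn (size ts).-1 hl.
move=> /andP[_ h1] /andP[h2 _]; lra.
Qed.


Lemma poly_lb (T : R) (n : nat) : 0 <= T -> (0 < n)%N ->
  exists2 ts : seq R, (sorted <=%R ts /\ all (fun t => 0 <= t <= T) ts) &
    T - T / n%:R * (th T - th 0) <= poly_len (@sc R) ts.
Proof.
move=> T0 n0.
have nR : (0 : R) < n%:R by rewrite ltr0n.
pose f := fun i : nat => T * i%:R / n%:R.
have fmono : {homo f : x y / (x <= y)%N >-> x <= y}.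
  by move=> x y xy; rewrite /f ler_pM2r ?invr_gt0 // ler_wpM2l // ler_nat.
exists (mkseq f n.+1).
  split.
    by rewrite /mkseq; apply: (homo_sorted fmono); exact: iota_sorted.
  apply/allP => x /mapP [i]; rewrite mem_iota => /andP[_ hi] ->.
  rewrite /f; apply/andP; split.
    by rewrite divr_ge0 ?mulr_ge0 ?ler0n // ltW.
  rewrite ler_pdivrMr // ler_wpM2l // ler_nat.
  by rewrite add0n ltnS in hi.
set h := T / n%:R.
pose g := fun i : nat => th (f i).
rewrite /poly_len size_mkseq.
apply: (@le_trans _ _ (\sum_(i < n) (h * (1 - (g i.+1 - g i))))).
  have E : \sum_(i < n) (h * (1 - (g i.+1 - g i))) = T - h * (th T - th 0).
    rewrite -(big_mkord xpredT (fun i => h * (1 - (g i.+1 - g i)))).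
    have -> : \sum_(0 <= i < n) (h * (1 - (g i.+1 - g i))) =
       \sum_(0 <= i < n) (h - h * (g i.+1 - g i)).
      by apply: eq_bigr => i _; rewrite mulrBr mulr1.
    rewrite sumrB sumr_const_nat -mulr_sumr telescope_sumr // subn0 /g /f.
    have e0 : T * (0%N)%:R / n%:R = 0 by rewrite mulr0 mul0r.
    rewrite mulfK ?gt_eqF // e0 /h -mulr_natr.
    by field; rewrite gt_eqF.
  by rewrite E.
apply: ler_sum => i _.
have hi : (i < n.+1)%N by apply: ltn_trans (ltn_ord i) _.
have hi1 : (i.+1 < n.+1)%N by rewrite ltnS.
rewrite !nth_mkseq //.
have -> : h = f i.+1 - f i by rewrite /h /f -natr1; field; rewrite gt_eqF.
apply: Low; last by apply: fmono.
by apply: lt_le_trans (ltrN10 R) _; rewrite /f divr_ge0 ?mulr_ge0 ?ler0n // ltW.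
Qed.


Lemma arc_eq (T : R) : 0 <= T -> arc_length (@sc R) 0 T = T%:E.
Proof.
move=> T0; rewrite /arc_length.
set S := [set _ | _ in _].
have ub : (ereal_sup S <= T%:E)%E.
  apply: ge_ereal_sup => _ [ts [Hs Ha] <-]; rewrite lee_fin; exact: poly_ub.
have lb n : (0 < n)%N -> ((T - T / n%:R * (th T - th 0))%:E <= ereal_sup S)%E.
  move=> n0; have [ts [Hs Ha] H] := poly_lb T0 n0.
  apply: le_ereal_sup_tmp; exists (poly_len (@sc R) ts)%:E; first by exists ts.
  by rewrite lee_fin.
apply/le_anti; rewrite ub /=.
have l1 := lb 1%N isT.
move: lb ub l1; case: (ereal_sup S) => [r| |] lb ub l1 //=.
rewrite lee_fin in ub *.
apply/ler_addgt0Pr => e e0.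
set K := th T - th 0.
have K0 : 0 <= K by rewrite subr_ge0 th_mono.
pose n := (Num.truncn (T * K / e)).+1.
have hn : T * K / e < n%:R := Num.Theory.truncnS_gt _.
have := lb n isT; rewrite lee_fin => hl.
have : T / n%:R * K < e.
  rewrite mulrAC ltr_pdivrMr ?ltr0n //.
  by move: hn; rewrite ltr_pdivrMr // [n%:R * e]mulrC.
move=> hh; rewrite -/K in hl; lra.
Qed.

End T4.

Section T5.
Variable R : realType.

Lemma Xinc (x y : R) : 0 <= x -> x < y -> y <= 2 -> Xc x < Xc y.
Proof.
move=> x0 xy y2.
have hx : -1 < x by apply: lt_le_trans x0; rewrite ltrN10.
have [c /[dup] /itvP hc _ h] := gc_mvt 1 0 hx xy.
move: h; rewrite /gc !mul1r !mul0r !addr0 => h.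
rewrite -subr_gt0 h mulr_gt0 ?subr_gt0 //.
have [xc cy] : x < c /\ c < y by rewrite !hc.
apply: lt_le_trans (cos1_gt0 R) _; apply: cos_ge_cos1; apply: th_range.
apply/andP; split; lra.
Qed.

Lemma sinth_pos (c : R) : 1 <= c <= 2 -> cos 1 * Num.sqrt (c - 1) <= sin (th c).
Proof.
move=> /andP[c1 c2]; rewrite th_ge1 //; apply: sin_ge.
rewrite sqrtr_ge0 /= -[X in _ <= X]sqrtr1 ler_sqrt //; lra.
Qed.

Lemma sinth_neg (c : R) : 0 <= c <= 1 -> sin (th c) <= - (cos 1 * Num.sqrt (1 - c)).
Proof.
move=> /andP[c0 c1]; rewrite th_le1 // sinN lerN2; apply: sin_ge.
rewrite sqrtr_ge0 /= -[X in _ <= X]sqrtr1 ler_sqrt //; lra.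
Qed.

Lemma gc01 (t : R) : gc 0 1 t = Yc t.
Proof. by rewrite /gc mul0r add0r mul1r. Qed.

Lemma YR (u : R) : 0 < u -> u <= 1 ->
  cos 1 * Num.sqrt (u / 2) * (u / 2) <= Yc (1 + u) - Yc 1.
Proof.
move=> u0 u1.
have h1 : -1 < (1 : R) by lra.
have h2 : -1 < 1 + u / 2 by lra.
have l1 : 1 < 1 + u / 2 by lra.
have l2 : 1 + u / 2 < 1 + u by lra.
have [c1 /[dup] /itvP hc1 _ e1] := gc_mvt 0 1 h1 l1.
have [c2 /[dup] /itvP hc2 _ e2] := gc_mvt 0 1 h2 l2.
rewrite !gc01 !mul0r !add0r !mul1r in e1 e2.
have [a1 b1] : 1 < c1 /\ c1 < 1 + u / 2 by rewrite !hc1.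
have [a2 b2] : 1 + u / 2 < c2 /\ c2 < 1 + u by rewrite !hc2.
have s1 : cos 1 * Num.sqrt (c1 - 1) <= sin (th c1) by apply: sinth_pos; apply/andP; split; lra.
have s2 : cos 1 * Num.sqrt (c2 - 1) <= sin (th c2) by apply: sinth_pos; apply/andP; split; lra.
have k0 := cos1_gt0 R.
have q1 := sqrtr_ge0 (c1 - 1).
have q2 : Num.sqrt (u / 2) <= Num.sqrt (c2 - 1) by rewrite ler_sqrt; lra.
have -> : Yc (1 + u) - Yc 1 = (Yc (1 + u) - Yc (1 + u / 2)) + (Yc (1 + u / 2) - Yc 1) by ring.
rewrite e1 e2.
have -> : 1 + u - (1 + u / 2) = u / 2 by field.
have -> : 1 + u / 2 - 1 = u / 2 by field.
have t1 : 0 <= sin (th c1) * (u / 2).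
  apply: mulr_ge0; last by lra.
  by apply: le_trans s1; apply: mulr_ge0; lra.
have t2 : cos 1 * Num.sqrt (u / 2) <= sin (th c2).
  apply: le_trans s2; apply: ler_wpM2l; lra.
nra.
Qed.

Lemma YL (u : R) : 0 < u -> u <= 1 ->
  cos 1 * Num.sqrt (u / 2) * (u / 2) <= Yc (1 - u) - Yc 1.
Proof.
move=> u0 u1.
have h1 : -1 < 1 - u / 2 by lra.
have h2 : -1 < 1 - u by lra.
have l1 : 1 - u / 2 < 1 by lra.
have l2 : 1 - u < 1 - u / 2 by lra.
have [c1 /[dup] /itvP hc1 _ e1] := gc_mvt 0 1 h1 l1.
have [c2 /[dup] /itvP hc2 _ e2] := gc_mvt 0 1 h2 l2.
rewrite !gc01 !mul0r !add0r !mul1r in e1 e2.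
have [a1 b1] : 1 - u / 2 < c1 /\ c1 < 1 by rewrite !hc1.
have [a2 b2] : 1 - u < c2 /\ c2 < 1 - u / 2 by rewrite !hc2.
have s1 : sin (th c1) <= - (cos 1 * Num.sqrt (1 - c1)) by apply: sinth_neg; apply/andP; split; lra.
have s2 : sin (th c2) <= - (cos 1 * Num.sqrt (1 - c2)) by apply: sinth_neg; apply/andP; split; lra.
have k0 := cos1_gt0 R.
have q1 := sqrtr_ge0 (1 - c1).
have q2 : Num.sqrt (u / 2) <= Num.sqrt (1 - c2) by rewrite ler_sqrt; lra.
have -> : Yc (1 - u) - Yc 1 = - ((Yc 1 - Yc (1 - u / 2)) + (Yc (1 - u / 2) - Yc (1 - u))) by ring.
rewrite e1 e2.
have -> : 1 - u / 2 - (1 - u) = u / 2 by field.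
have -> : 1 - (1 - u / 2) = u / 2 by field.
have sn : sin (th c1) <= 0.
  have : 0 <= cos 1 * Num.sqrt (1 - c1) by apply: mulr_ge0; lra.
  lra.
have t1 : sin (th c1) * (u / 2) <= 0 by nra.
have t2 : sin (th c2) <= - (cos 1 * Num.sqrt (u / 2)).
  have : cos 1 * Num.sqrt (u / 2) <= cos 1 * Num.sqrt (1 - c2) by apply: ler_wpM2l; lra.
  lra.
nra.
Qed.

End T5.

Section T6.
Variable R : realType.

Lemma sqrt_le_sq (Q u : R) : 0 <= Q -> Num.sqrt Q <= u -> Q <= u ^+ 2.
Proof.
move=> Q0 h; have s0 := sqrtr_ge0 Q; have e := sqr_sqrtr Q0.
rewrite -e; nra.
Qed.

Lemma far (d Q : R) : 0 < d -> Q < d ^+ 2 -> Num.sqrt Q < d.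
Proof.
move=> d0 h; rewrite -[X in _ < X](gtr0_norm d0) -sqrtr_sqr ltr_sqrt //.
by rewrite exprn_gt0.
Qed.

Lemma notmono (Rad : R) : 0 < Rad -> ~ R_monotone (@sc R) 2 Rad.
Proof.
move=> R0 H.
set k := cos (1 : R).
have k0 : 0 < k := cos1_gt0 R.
have k1 : k <= 1 := cos_le1 1.
set d := Num.min Rad 1.
have d0 : 0 < d by rewrite lt_min R0 ltr01.
have dR : d <= Rad by rewrite ge_min lexx.
have d1 : d <= 1 by rewrite ge_min lexx orbT.
set w := d * k / 4.
have w0 : 0 < w by rewrite /w; apply: divr_gt0; [apply: mulr_gt0|]; lra.
have dk : d * k = 4 * w by rewrite /w; field.
have w1 : w <= 1 / 4.
  have : d * k <= 1 by nra.
  lra.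
set u := 2 * w ^+ 2.
have u0 : 0 < u by rewrite /u; apply: mulr_gt0; [lra|exact: exprn_gt0].
have u1 : u <= 1 by rewrite /u; nra.
have sq : Num.sqrt (u / 2) = w.
  by rewrite /u (_ : 2 * w ^+ 2 / 2 = w ^+ 2) ?sqrtr_sqr ?gtr0_norm //; field.
have hR := YR u0 u1; have hL := YL u0 u1.
rewrite sq -/k (_ : u / 2 = w ^+ 2) in hR hL; last by rewrite /u; field.
have key : u ^+ 2 < 2 * d * (k * w * w ^+ 2).
  rewrite /u (_ : 2 * d * (k * w * w ^+ 2) = 2 * (d * k) * w ^+ 3); last by ring.
  rewrite dk; have w4 : 0 < w ^+ 4 by exact: exprn_gt0.
  have -> : (2 * w ^+ 2) ^+ 2 = 4 * w ^+ 4 by ring.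
  have -> : 2 * (4 * w) * w ^+ 3 = 8 * w ^+ 4 by ring.
  lra.
have m1 : -1 < (1 : R) by lra.
have LR := Lip m1 (_ : 1 <= 1 + u).
have LL := @Lip R (1 - u) 1 (_ : -1 < 1 - u) (_ : 1 - u <= 1).
pose a : R * R := (Xc 1, Yc 1 + d).
have fR : dist2 (sc (1 + u)) a < d.
  rewrite /dist2 /=; apply: far => //.
  have := LR ltac:(lra); rewrite dist2_sc => h.
  have := sqrt_le_sq (_ : 0 <= _) h; rewrite ?addr_ge0 ?sqr_ge0 // => hq.
  rewrite (_ : 1 + u - 1 = u) in hq; last by ring.
  nra.
have fL : dist2 (sc (1 - u)) a < d.
  rewrite /dist2 /=; apply: far => //.
  have := LL ltac:(lra) ltac:(lra); rewrite dist2_sc => h.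
  have := sqrt_le_sq (_ : 0 <= _) h; rewrite ?addr_ge0 ?sqr_ge0 // => hq.
  rewrite (_ : 1 - (1 - u) = u) in hq; last by ring.
  nra.
set rho := Num.max (dist2 (sc (1 - u)) a) (dist2 (sc (1 + u)) a).
have rho0 : 0 <= rho by rewrite le_max /dist2 sqrtr_ge0.
have rhod : rho < d by rewrite gt_max fL fR.
have := H a rho rho0 (le_trans (ltW rhod) dR).
move/connected_intervalP => /(_ (1 - u) (1 + u)) hI.
have : (0 <= (1 : R) <= 2) /\ dist2 (sc 1) a <= rho.
  apply: hI.
  - split; first by apply/andP; split; lra.
    by rewrite le_max lexx.
  - split; first by apply/andP; split; lra.
    by rewrite le_max lexx orbT.
  - by apply/andP; split; lra.
move=> [_]; rewrite /dist2 /=.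
rewrite (_ : (Xc 1 - Xc 1) ^+ 2 + (Yc 1 - (Yc 1 + d)) ^+ 2 = d ^+ 2); last by ring.
rewrite sqrtr_sqr gtr0_norm //; lra.
Qed.

End T6.

Unset Implicit Arguments.

Theorem mainTheorem2 (R : realType) :
  exists (s : R -> R * R) (L : R),
    0 < L /\
    arclength_param s L /\
    (arc_length s 0 L < +oo)%E /\
    {within `[0, L], continuous (fun t => (s t).1)} /\
    {within `[0, L], continuous (fun t => (s t).2)} /\
    (forall t, 0 <= t <= L ->
       derivable (fun u => (s u).1) t 1 /\ derivable (fun u => (s u).2) t 1) /\
    {in `[0, L] &, injective s} /\
    (forall Rad : R, 0 < Rad -> ~ R_monotone s L Rad).
Proof.
exists (@sc R), 2.
have dX (t : R) : 0 <= t -> derivable (fun u => (sc u).1) t 1.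
  by move=> t0; have [] := @Xc_der R t ltac:(lra).
have dY (t : R) : 0 <= t -> derivable (fun u => (sc u).2) t 1.
  by move=> t0; have [] := @Yc_der R t ltac:(lra).
split; first lra.
split; first by move=> t /andP[t0 _]; exact: arc_eq.
split; first by rewrite arc_eq ?ltry //; lra.
split.
  apply: derivable_within_continuous => x; rewrite in_itv /= => /andP[x0 _].
  exact: dX.
split.
  apply: derivable_within_continuous => x; rewrite in_itv /= => /andP[x0 _].
  exact: dY.
split; first by move=> t /andP[t0 _]; split; [exact: dX|exact: dY].
split; last exact: notmono.
move=> x y; rewrite !in_itv /= => /andP[x0 x2] /andP[y0 y2] e.
have ex : Xc x = Xc y by move: e; rewrite /sc => -[].
case: (ltgtP x y) => // h.
  by have := Xinc x0 h y2; rewrite ex ltxx.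
by have := Xinc y0 h x2; rewrite ex ltxx.
Qed.
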